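(* Fix stress levels $x_1<x_2$, a stress-change time $\tau>0$, and inspection times $0=t_0<t_1<\cdots<t_L$ with $t_k=\tau$ for some $1\le k<L$. Let $\theta=(\gamma_0,\gamma_1,a_1)\in\Theta=(0,\infty)^3$, and let $s=s(\theta)=u-\tau$, where $u$ is the unique positive root of $\frac{\gamma_1}{2}u^2+\gamma_0u-e^{a_1(x_1-x_2)}\left(\gamma_0\tau+\gamma_1\frac{\tau^2}{2}\right)=0$. Define $$R_\theta(t,x_1)=\exp\!\Big(-e^{a_1x_1}\big(\gamma_0t+\gamma_1\tfrac{t^2}{2}\big)\Big),\qquad R_\theta(t,x_2)=\exp\!\Big(-e^{a_1x_2}\big(\gamma_0(t+s)+\gamma_1\tfrac{(t+s)^2}{2}\big)\Big),$$ and the step-stress reliability $R_\theta(t)=R_\theta(t,x_1)$ for $0\le t\le\tau$, $R_\theta(t)=R_\theta(t,x_2)$ for $t\ge\tau$. Let $\pi_j(\theta)=R_\theta(t_{j-1})-R_\theta(t_j)$ for $j=1,\dots,L$, $\pi_{L+1}(\theta)=R_\theta(t_L)$, $\pi(\theta)=(\pi_1(\theta),\dots,\pi_{L+1}(\theta))^T$. Given observed counts $(n_1,\dots,n_{L+1})$ with $N=\sum_j n_j$ and $\widehat p=(n_1/N,\dots,n_{L+1}/N)^T$, and $\beta\ge0$, let $\widehat\theta_\beta$ be a minimum density power divergence estimator, i.e. a minimizer over $\Theta$ of $d_\beta(\widehat p,\pi(\theta))$, where for $\beta>0$ $$d_\beta(\widehat p,\pi(\theta))=\sum_{j=1}^{L+1}\Big[\pi_j(\theta)^{\beta+1}-\big(1+\tfrac1\beta\big)\pi_j(\theta)^\beta\widehat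 p_j+\tfrac1\beta\widehat p_j^{\beta+1}\Big]$$ and for $\beta=0$, $d_0(\widehat p,\pi(\theta))=\sum_{j}\widehat p_j\log(\widehat p_j/\pi_j(\theta))$. Then $\widehat\theta_\beta$ satisfies $U_\beta(\widehat\theta_\beta)=0\in\mathbb{R}^3$, where $$U_\beta(\theta)=W(\theta)^TD(\theta)^{\beta-1}\big(\widehat p-\pi(\theta)\big),$$ $D(\theta)=\mathrm{diag}(\pi_1(\theta),\dots,\pi_{L+1}(\theta))$, and $W(\theta)$ is the $(L+1)\times3$ Jacobian matrix of $\pi(\theta)$ whose $j$-th row is $w_j^T$ with $w_j=\frac{\partial R_\theta(t_{j-1},x_1)}{\partial\theta}-\frac{\partial R_\theta(t_j,x_1)}{\partial\theta}$ if $t_{j-1}<\tau$, $w_j=\frac{\partial R_\theta(t_{j-1},x_2)}{\partial\theta}-\frac{\partial R_\theta(t_j,x_2)}{\partial\theta}$ if $\tau\le t_{j-1}$ and $j\le L$, and $w_{L+1}=\frac{\partial R_\theta(t_L,x_2)}{\partial\theta}$. Here, with $k_1(t)=\gamma_1t+\gamma_0$ and $k_2(t)=\frac{\gamma_1}{2}t+\gamma_0$, the gradients are $$\frac{\partial R_\theta(t,x_1)}{\partial\gamma_0}=-R_\theta(t,x_1)e^{a_1x_1}t,\quad \frac{\partial R_\theta(t,x_1)}{\partial\gamma_1}=-R_\theta(t,x_1)e^{a_1x_1}\frac{t^2}{2},\quad \frac{\partial R_\theta(t,x_1)}{\partial a_1}=-R_\theta(t,x_1)e^{a_1x_1}t\,k_2(t)\,x_1,$$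 $$\frac{\partial R_\theta(t,x_2)}{\partial\gamma_0}=-R_\theta(t,x_2)e^{a_1x_2}\Big((t+s)+\frac{\gamma_1}{2}\frac{(\tau+s)s}{k_2(\tau)}\frac{k_1(t+s)}{k_1(\tau+s)}\Big),$$ $$\frac{\partial R_\theta(t,x_2)}{\partial\gamma_1}=-R_\theta(t,x_2)e^{a_1x_2}\Big(\frac{(t+s)^2}{2}-\frac{\gamma_0}{2}\frac{(\tau+s)s}{k_2(\tau)}\frac{k_1(t+s)}{k_1(\tau+s)}\Big),$$ $$\frac{\partial R_\theta(t,x_2)}{\partial a_1}=-R_\theta(t,x_2)e^{a_1x_2}\Big[(t+s)k_2(t+s)x_2+\frac{k_1(t+s)}{k_1(\tau+s)}(\tau+s)k_2(\tau+s)(x_1-x_2)\Big].$$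
   Context: Interval-monitored simple step-stress accelerated life test under a proportional hazards model with linear baseline hazard $h_0(t)=\gamma_0+\gamma_1t$ and stress effect $e^{a_1x}$, combined with the cumulative exposure model (the shift $s$ makes the cumulative hazard continuous at $\tau$, with $s<0$ and $\tau+s>0$). $N$ devices are tested; $n_j$ is the number failing in $(t_{j-1},t_j]$ for $j\le L$ and $n_{L+1}$ the number surviving past $t_L$. Stress is $x_1$ on $[0,\tau)$ and $x_2$ afterwards. *)

(* Defs.v *)
From Stdlib Require Import Reals.
Open Scope R_scope.

(* sum over j = 1 .. L+1 *)
Definition sum1 (L : nat) (f : nat -> R) : R := sum_f_R0 (fun i => f (S i)) L.

(* power with the convention 0^a = 0 (used only for a > 0) *)
Definition pw (x a : R) : R := if Rle_dec x 0 then 0 else Rpower x a.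

Definition Hc (g0 g1 t : R) : R := g0 * t + g1 * (t ^ 2) / 2.
Definition k1 (g0 g1 t : R) : R := g1 * t + g0.
Definition k2 (g0 g1 t : R) : R := g1 / 2 * t + g0.

Definition Rx1 (g0 g1 a1 x1 t : R) : R := exp (- (exp (a1 * x1) * Hc g0 g1 t)).
Definition Rx2 (g0 g1 a1 x2 s t : R) : R := exp (- (exp (a1 * x2) * Hc g0 g1 (t + s))).

Definition Rstep (g0 g1 a1 x1 x2 tau s t : R) : R :=
  if Rle_dec t tau then Rx1 g0 g1 a1 x1 t else Rx2 g0 g1 a1 x2 s t.

Definition pij (g0 g1 a1 x1 x2 tau s : R) (L : nat) (tt : nat -> R) (j : nat) : R :=
  if (j <=? L)%nat
  then Rstep g0 g1 a1 x1 x2 tau s (tt (j - 1)%nat) - Rstep g0 g1 a1 x1 x2 tau s (tt j)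
  else Rstep g0 g1 a1 x1 x2 tau s (tt L).

Definition Ntot (L : nat) (n : nat -> nat) : R := sum1 L (fun j => INR (n j)).
Definition phat (L : nat) (n : nat -> nat) (j : nat) : R := INR (n j) / Ntot L n.

(* density power divergence d_beta(phat, pi); beta = 0: Kullback-Leibler
   (Stdlib's ln 0 = 0 gives the convention 0 * log 0 = 0) *)
Definition dpd (beta : R) (L : nat) (p q : nat -> R) : R :=
  if Req_EM_T beta 0
  then sum1 L (fun j => p j * ln (p j / q j))
  else sum1 L (fun j => Rpower (q j) (beta + 1) - (1 + 1 / beta) * Rpower (q j) beta * p j
                        + 1 / beta * pw (p j) (beta + 1)).

(* components (i = 0: gamma0, i = 1: gamma1, i = 2: a1) of the gradients *)
Definition dRx1 (i : nat) (g0 g1 a1 x1 t : R) : R :=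
  - Rx1 g0 g1 a1 x1 t * exp (a1 * x1) *
    match i with
    | O => t
    | 1%nat => t ^ 2 / 2
    | _ => t * k2 g0 g1 t * x1
    end.

Definition dRx2 (i : nat) (g0 g1 a1 x1 x2 tau s t : R) : R :=
  - Rx2 g0 g1 a1 x2 s t * exp (a1 * x2) *
    match i with
    | O => (t + s) + g1 / 2 * ((tau + s) * s / k2 g0 g1 tau) * (k1 g0 g1 (t + s) / k1 g0 g1 (tau + s))
    | 1%nat => (t + s) ^ 2 / 2 - g0 / 2 * ((tau + s) * s / k2 g0 g1 tau) * (k1 g0 g1 (t + s) / k1 g0 g1 (tau + s))
    | _ => (t + s) * k2 g0 g1 (t + s) * x2
           + k1 g0 g1 (t + s) / k1 g0 g1 (tau + s) * (tau + s) * k2 g0 g1 (tau + s) * (x1 - x2)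
    end.

Definition wj (i : nat) (g0 g1 a1 x1 x2 tau s : R) (L : nat) (tt : nat -> R) (j : nat) : R :=
  if (L <? j)%nat then dRx2 i g0 g1 a1 x1 x2 tau s (tt L)
  else if Rlt_dec (tt (j - 1)%nat) tau
  then dRx1 i g0 g1 a1 x1 (tt (j - 1)%nat) - dRx1 i g0 g1 a1 x1 (tt j)
  else dRx2 i g0 g1 a1 x1 x2 tau s (tt (j - 1)%nat) - dRx2 i g0 g1 a1 x1 x2 tau s (tt j).

Definition Ucomp (i : nat) (beta g0 g1 a1 x1 x2 tau s : R) (L : nat) (tt : nat -> R)
  (p : nat -> R) : R :=
  sum1 L (fun j => wj i g0 g1 a1 x1 x2 tau s L tt j
                   * Rpower (pij g0 g1 a1 x1 x2 tau s L tt j) (beta - 1)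
                   * (p j - pij g0 g1 a1 x1 x2 tau s L tt j)).

(* Main.v *)
Require Import Defs.
From Stdlib Require Import Reals Lra Lia.
From Coquelicot Require Import Coquelicot.
Open Scope R_scope.
Ltac setexp := repeat match goal with |- context [exp ?x] => let e := fresh "e" in set (e := exp x) in * end.

Lemma L_Rx1 (g0 g1 a d0 d1 d2 x1 t0 : R) :
  is_derive (fun h => Rx1 (g0+h*d0) (g1+h*d1) (a+h*d2) x1 t0) 0
   (d0 * dRx1 0 g0 g1 a x1 t0 + d1 * dRx1 1 g0 g1 a x1 t0 + d2 * dRx1 2 g0 g1 a x1 t0).
Proof.
  unfold Rx1, dRx1, Hc, k2. auto_derive; auto.
  repeat rewrite Rmult_0_l; repeat rewrite Rplus_0_r. unfold Rx1, Hc, Rdiv. cbn [pow]. setexp. ring.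
Qed.

Lemma L_Rx2 (g0 g1 a d0 d1 d2 x1 x2 tau t0 : R) (S : R -> R) (S' : R) :
 0 < g0 -> 0 < g1 -> 0 < tau -> 0 < tau + S 0 ->
 g1/2*(tau + S 0)^2 + g0*(tau + S 0) - exp(a*(x1-x2))*(g0*tau + g1*tau^2/2) = 0 ->
 is_derive S 0 S' ->
 (g1*(tau+S 0) + g0) * S' = -(d0*((tau+S 0) - exp(a*(x1-x2))*tau) + d1*((tau+S 0)^2/2 - exp(a*(x1-x2))*tau^2/2) - d2*(x1-x2)*exp(a*(x1-x2))*(g0*tau+g1*tau^2/2)) ->
 is_derive (fun h => Rx2 (g0+h*d0) (g1+h*d1) (a+h*d2) x2 (S h) t0) 0
   (d0 * dRx2 0 g0 g1 a x1 x2 tau (S 0) t0 + d1 * dRx2 1 g0 g1 a x1 x2 tau (S 0) t0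
    + d2 * dRx2 2 g0 g1 a x1 x2 tau (S 0) t0).
Proof.
  intros Hg0 Hg1 Htau Hu Q HD HS.
  assert (HE : ex_derive S 0) by (exists S'; exact HD).
  unfold Rx2, dRx2, Hc, k1, k2. auto_derive; [tauto|].
  replace (Derive (fun x => S x) 0) with S' by (symmetry; apply is_derive_unique; exact HD).
  repeat rewrite Rmult_0_l; repeat rewrite Rplus_0_r.
  set (s0 := S 0) in *. set (c := exp (a*(x1-x2))) in *.
  assert (K1 : g1*(tau+s0)+g0 <> 0) by nra.
  assert (K2 : g1/2*tau+g0 <> 0) by nra.
  assert (K3 : g0*tau+g1*tau^2/2 <> 0) by nra.
  assert (HS' : S' = -(d0*((tau+s0) - c*tau) + d1*((tau+s0)^2/2 - c*tau^2/2) - d2*(x1-x2)*c*(g0*tau+g1*tau^2/2)) / (g1*(tau+s0)+g0)).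
  { rewrite <- HS. field. exact K1. }
  assert (Hcc : c = (g1/2*(tau + s0)^2 + g0*(tau + s0)) / (g0*tau + g1*tau^2/2)).
  { field_simplify_eq; [lra| nra]. }
  unfold Rx2, Defs.Hc.
  replace (exp (- (exp (a*x2) * (g0*(t0+s0) + g1*(t0+s0)^2/2)))) with (exp (- (exp (a*x2) * (g0*(t0+s0) + g1*((t0+s0)*((t0+s0)*1)) * /2)))) by (f_equal; field).
  setexp. rewrite HS'. rewrite Hcc. field. repeat split; [exact K1 | nra | nra].
Qed.

Lemma loc_pos (g d : R) : 0 < g -> locally 0 (fun h => 0 < g + h*d).
Proof.
  intros Hg.
  assert (He : 0 < g / (Rabs d + 1)).
  { apply Rdiv_lt_0_compat; [lra| pose proof (Rabs_pos d); lra]. }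
  exists (mkposreal _ He). intros y Hy.
  change (Rabs (y - 0) < g / (Rabs d + 1)) in Hy.
  rewrite Rminus_0_r in Hy.
  assert (Rabs (y*d) <= Rabs y * (Rabs d + 1)).
  { rewrite Rabs_mult. pose proof (Rabs_pos y). nra. }
  assert (Rabs y * (Rabs d + 1) < g).
  { pose proof (Rabs_pos d). apply (Rmult_lt_compat_r (Rabs d + 1)) in Hy; [|lra].
    unfold Rdiv in Hy. rewrite Rmult_assoc, Rinv_l in Hy; lra. }
  pose proof (Rle_abs (- (y*d))). rewrite Rabs_Ropp in H1. lra.
Qed.

Lemma locmin (f : R -> R) (l : R) : is_derive f 0 l ->
  locally 0 (fun h => f 0 <= f h) -> l = 0.
Proof.
  intros Hd [eps He].
  apply is_derive_Reals in Hd.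
  pose (pr := exist (fun l => derivable_pt_lim f 0 l) l Hd : derivable_pt f 0).
  assert (derive_pt f 0 pr = 0).
  { apply (deriv_minimum f (-eps) eps 0 pr).
    - pose proof (cond_pos eps); lra.
    - apply cond_pos.
    - intros x H1 H2. apply He. change (Rabs (x - 0) < eps).
      rewrite Rminus_0_r. apply Rabs_def1; lra. }
  exact H.
Qed.

Lemma sum_derive (F : nat -> R -> R) (F' : nat -> R) (x : R) (n : nat) :
  (forall j, (j <= n)%nat -> is_derive (F j) x (F' j)) ->
  is_derive (fun h => sum_f_R0 (fun j => F j h) n) x (sum_f_R0 F' n).
Proof.
  induction n; intros H; simpl.
  - apply H; lia.
  - apply (is_derive_plus (fun h => sum_f_R0 (fun j => F j h) n) (F (S n))).
    + apply IHn; intros; apply H; lia.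
    + apply H; lia.
Qed.

Lemma tele (r : nat -> R) (m : nat) :
  sum_f_R0 (fun i => r i - r (S i)) m = r 0%nat - r (S m).
Proof. induction m; simpl; [ring|rewrite IHm; ring]. Qed.

Lemma sum_pij g0 g1 a1 x1 x2 tau s L tt :
  sum1 L (pij g0 g1 a1 x1 x2 tau s L tt) = Rstep g0 g1 a1 x1 x2 tau s (tt 0%nat).
Proof.
  unfold sum1. destruct L as [|m].
  - simpl. unfold pij. simpl. reflexivity.
  - simpl sum_f_R0 at 1.
    rewrite (sum_eq _ (fun i => Rstep g0 g1 a1 x1 x2 tau s (tt i) - Rstep g0 g1 a1 x1 x2 tau s (tt (S i)))).
    + rewrite tele. unfold pij.
      replace (S (S m) <=? S m)%nat with false by (symmetry; apply Nat.leb_gt; lia). ring.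
    + intros i Hi. unfold pij.
      replace (S i <=? S m)%nat with true by (symmetry; apply Nat.leb_le; lia).
      replace (S i - 1)%nat with i by lia. reflexivity.
Qed.

Lemma root_uniq (g0 g1 C u : R) : 0 < g0 -> 0 < g1 -> 0 < u ->
  g1/2*u^2 + g0*u - C = 0 -> u = (- g0 + sqrt (g0^2 + 2*g1*C)) / g1.
Proof.
  intros H0 H1 Hu Q.
  assert (E : g0^2 + 2*g1*C = (g1*u+g0)^2).
  { assert (C = g1/2*u^2 + g0*u) by lra. subst C. field. }
  rewrite E, sqrt_pow2 by nra. field. lra.
Qed.
Lemma S_deriv (g0 g1 a d0 d1 d2 x1 x2 tau : R) (S : R -> R) :
  0 < g0 -> 0 < g1 -> 0 < tau ->
  locally 0 (fun h => 0 < g0 + h*d0 /\ 0 < g1 + h*d1 /\ 0 < tau + S h /\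
     (g1+h*d1)/2*(tau + S h)^2 + (g0+h*d0)*(tau + S h)
       - exp((a+h*d2)*(x1-x2))*((g0+h*d0)*tau + (g1+h*d1)*tau^2/2) = 0) ->
  exists S', is_derive S 0 S' /\
   (g1*(tau+S 0) + g0) * S' = -(d0*((tau+S 0) - exp(a*(x1-x2))*tau) + d1*((tau+S 0)^2/2 - exp(a*(x1-x2))*tau^2/2) - d2*(x1-x2)*exp(a*(x1-x2))*(g0*tau+g1*tau^2/2)).
Proof.
  intros Hg0 Hg1 Htau Hloc.
  pose (Se := fun h => (- (g0+h*d0) + sqrt ((g0+h*d0)^2 + 2*(g1+h*d1)*(exp((a+h*d2)*(x1-x2))*((g0+h*d0)*tau + (g1+h*d1)*tau^2/2)))) / (g1+h*d1) - tau).
  assert (Hext : locally 0 (fun h => Se h = S h)).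
  { eapply filter_imp; [|exact Hloc]. intros h [P0 [P1 [P2 P3]]].
    unfold Se. rewrite <- (root_uniq _ _ _ _ P0 P1 P2 P3). ring. }
  assert (HE : ex_derive Se 0).
  { unfold Se. auto_derive. repeat rewrite Rmult_0_l; repeat rewrite Rplus_0_r.
    split; [|split; [lra|exact I]].
    pose proof (exp_pos (a*(x1-x2))).
    assert (0 < exp (a * (x1 - x2)) * (g0 * tau + g1 * (tau * (tau * 1)) * / 2)) by (apply Rmult_lt_0_compat; nra).
    nra. }
  assert (HE' : ex_derive S 0) by (exact (ex_derive_ext_loc _ _ _ Hext HE)).
  exists (Derive S 0). split; [apply Derive_correct; exact HE'|].
  pose (F := fun h => (g1+h*d1)/2*(tau + S h)^2 + (g0+h*d0)*(tau + S h)
       - exp((a+h*d2)*(x1-x2))*((g0+h*d0)*tau + (g1+h*d1)*tau^2/2)).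
  assert (H0 : is_derive F 0 0).
  { apply (is_derive_ext_loc (fun _ => 0)).
    - eapply filter_imp; [|exact Hloc]. intros h [_ [_ [_ P3]]]. unfold F. rewrite P3. reflexivity.
    - auto_derive; auto. }
  set (S' := Derive S 0) in *. set (s0 := S 0) in *. set (c := exp (a*(x1-x2))).
  assert (H1 : is_derive F 0 (d1/2*(tau+s0)^2 + g1*(tau+s0)*S' + d0*(tau+s0) + g0*S'
           - c*(x1-x2)*d2*(g0*tau+g1*tau^2/2) - c*(d0*tau+d1*tau^2/2))).
  { unfold F. auto_derive; [tauto|].
    fold S'. repeat rewrite Rmult_0_l; repeat rewrite Rplus_0_r. fold s0. fold c. change (Derive (fun x => S x) 0) with S'. field. }
  pose proof (is_derive_unique _ _ _ H0) as U0.
  pose proof (is_derive_unique _ _ _ H1) as U1.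
  rewrite U0 in U1.
  assert (E : (g1 * (tau + s0) + g0) * S' + (d0 * (tau + s0 - c * tau) + d1 * ((tau + s0) ^ 2 / 2 - c * tau ^ 2 / 2) - d2 * (x1 - x2) * c * (g0 * tau + g1 * tau ^ 2 / 2)) = (d1/2*(tau+s0)^2 + g1*(tau+s0)*S' + d0*(tau+s0) + g0*S'
           - c*(x1-x2)*d2*(g0*tau+g1*tau^2/2) - c*(d0*tau+d1*tau^2/2))) by field.
  lra.
Qed.
Lemma is_derive_val (f : R -> R) (x l l' : R) : is_derive f x l -> l = l' -> is_derive f x l'.
Proof. intros H E; subst; exact H. Qed.

Lemma Rpow_comp (g : R -> R) (w b : R) : is_derive g 0 w -> 0 < g 0 ->
  is_derive (fun h => Rpower (g h) b) 0 (b * Rpower (g 0) (b-1) * w).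
Proof.
  intros Hg Hp.
  assert (Hf : is_derive (fun x => Rpower x b) (g 0) (b * Rpower (g 0) (b-1))).
  { apply is_derive_Reals. apply derivable_pt_lim_power. exact Hp. }
  eapply is_derive_val. apply (is_derive_comp (fun x => Rpower x b) g); eauto.
  simpl. change (w * (b * Rpower (g 0) (b-1)) = b * Rpower (g 0) (b-1) * w). ring.
Qed.

Lemma comb_deriv (f1 f2 : R -> R) a b c p k :
  is_derive f1 0 a -> is_derive f2 0 b ->
  is_derive (fun h => f1 h - c * f2 h * p + k) 0 (a - c*b*p).
Proof.
  intros H1 H2. assert (ex_derive f1 0) by (eexists; eauto).
  assert (ex_derive f2 0) by (eexists; eauto).
  auto_derive; [tauto|].
  change (Derive (fun x => f1 x) 0) with (Derive f1 0).
  change (Derive (fun x => f2 x) 0) with (Derive f2 0).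
  rewrite (is_derive_unique _ _ _ H1), (is_derive_unique _ _ _ H2). ring.
Qed.

Lemma dpd_deriv (q : nat -> R -> R) (W : nat -> R) beta p L :
  0 <= beta ->
  (forall j, (1 <= j <= S L)%nat -> is_derive (q j) 0 (W j) /\ 0 < q j 0) ->
  (forall j, 0 <= p j) -> sum1 L W = 0 ->
  is_derive (fun h => dpd beta L p (fun j => q j h)) 0
    (-(beta+1) * sum1 L (fun j => W j * Rpower (q j 0) (beta-1) * (p j - q j 0))).
Proof.
  intros Hb Hq Hp HW. unfold dpd. destruct (Req_EM_T beta 0) as [E|E].
  - subst beta. unfold sum1.
    eapply is_derive_val.
    + apply (sum_derive (fun j h => p (S j) * ln (p (S j) / q (S j) h))
               (fun j => - (p (S j) * W (S j) / q (S j) 0))).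
      intros j Hj. destruct (Hq (S j)) as [Hd Hpos]; [lia|].
      destruct (Hp (S j)) as [Hpp|Hpp].
      * assert (ex_derive (q (S j)) 0) by (eexists; eauto).
        auto_derive.
        -- repeat split; auto; try lra. apply Rdiv_lt_0_compat; auto.
        -- replace (Derive (fun x => q (S j) x) 0) with (W (S j)) by (symmetry; apply is_derive_unique; exact Hd).
           field. split; lra.
      * rewrite <- Hpp. apply (is_derive_ext (fun _ => 0)).
        { intros. symmetry. apply Rmult_0_l. }
        eapply is_derive_val; [auto_derive; auto|]. simpl. field. lra.
    + unfold sum1 in HW.
      rewrite (sum_eq (fun i => W (S i) * Rpower (q (S i) 0) (0 - 1) * (p (S i) - q (S i) 0)) (fun i => W (S i) * p (S i) / q (S i) 0 - W (S i))).
      * rewrite minus_sum, HW.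
        rewrite (sum_eq (fun j => - (p (S j) * W (S j) / q (S j) 0)) (fun i => (W (S i) * p (S i) / q (S i) 0) * (-1))).
        -- rewrite <- scal_sum. ring.
        -- intros i Hi. field. destruct (Hq (S i)) as [_ Hpos]; [lia|lra].
      * intros i Hi. destruct (Hq (S i)) as [_ Hpos]; [lia|].
        replace (0 - 1) with (-(1)) by ring. rewrite Rpower_Ropp, Rpower_1 by exact Hpos.
        field. lra.
  - unfold sum1.
    eapply is_derive_val.
    + apply (sum_derive (fun j h => Rpower (q (S j) h) (beta + 1) - (1 + 1 / beta) * Rpower (q (S j) h) beta * p (S j) +
         1 / beta * pw (p (S j)) (beta + 1))
               (fun j => W (S j) * Rpower (q (S j) 0) (beta - 1) * (p (S j) - q (S j) 0) * (-(beta+1)))).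
      intros j Hj. destruct (Hq (S j)) as [Hd Hpos]; [lia|].
      eapply is_derive_val.
      * apply comb_deriv; apply Rpow_comp; eauto.
      * replace (beta + 1 - 1) with ((beta - 1) + 1) by ring.
        replace beta with ((beta - 1) + 1) at 4 by ring.
        rewrite Rpower_plus, Rpower_1 by exact Hpos. field. exact E.
    + rewrite scal_sum. reflexivity.
Qed.

Lemma Rx_tau g0 g1 a x1 x2 tau s :
  g1/2*(tau + s)^2 + g0*(tau + s) - exp(a*(x1-x2))*(g0*tau + g1*tau^2/2) = 0 ->
  Rx2 g0 g1 a x2 s tau = Rx1 g0 g1 a x1 tau.
Proof.
  intros Q. unfold Rx2, Rx1, Hc. f_equal. f_equal.
  replace (a*x1) with (a*x2 + a*(x1-x2)) by ring. rewrite exp_plus.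
  replace (g0 * (tau + s) + g1 * (tau + s) ^ 2 / 2) with (exp (a * (x1 - x2)) * (g0 * tau + g1 * tau ^ 2 / 2)) by lra.
  ring.
Qed.

Lemma tmono (t : nat -> R) (L : nat) : (forall j, (j < L)%nat -> t j < t (S j)) ->
  forall a b, (a < b)%nat -> (b <= L)%nat -> t a < t b.
Proof.
  intros H a b. induction b; intros Hab HbL; [lia|].
  destruct (Nat.eq_dec a b) as [->|Hne]; [apply H; lia|].
  apply Rlt_trans with (t b); [apply IHb; lia| apply H; lia].
Qed.

Lemma pij_deriv (g0 g1 a d0 d1 d2 x1 x2 tau : R) (L k : nat) (t : nat -> R) (Sf : R -> R) (S' : R) (j : nat) :
 0 < g0 -> 0 < g1 -> 0 < tau -> 0 < tau + Sf 0 ->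
 g1/2*(tau + Sf 0)^2 + g0*(tau + Sf 0) - exp(a*(x1-x2))*(g0*tau + g1*tau^2/2) = 0 ->
 is_derive Sf 0 S' ->
 (g1*(tau+Sf 0) + g0) * S' = -(d0*((tau+Sf 0) - exp(a*(x1-x2))*tau) + d1*((tau+Sf 0)^2/2 - exp(a*(x1-x2))*tau^2/2) - d2*(x1-x2)*exp(a*(x1-x2))*(g0*tau+g1*tau^2/2)) ->
 locally 0 (fun h => Rx2 (g0+h*d0) (g1+h*d1) (a+h*d2) x2 (Sf h) tau = Rx1 (g0+h*d0) (g1+h*d1) (a+h*d2) x1 tau) ->
 (forall j, (j < L)%nat -> t j < t (S j)) ->
 (k < L)%nat -> t k = tau -> (1 <= j <= S L)%nat ->
 is_derive (fun h => pij (g0+h*d0) (g1+h*d1) (a+h*d2) x1 x2 tau (Sf h) L t j) 0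
   (d0 * wj 0 g0 g1 a x1 x2 tau (Sf 0) L t j + d1 * wj 1 g0 g1 a x1 x2 tau (Sf 0) L t j
    + d2 * wj 2 g0 g1 a x1 x2 tau (Sf 0) L t j).
Proof.
  intros Hg0 Hg1 Htau Hu Q HD HS Hloc Ht HkL Htk Hj.
  pose proof (tmono t L Ht) as TM.
  assert (R1 : forall t0, t0 <= tau -> is_derive (fun h => Rstep (g0+h*d0) (g1+h*d1) (a+h*d2) x1 x2 tau (Sf h) t0) 0
     (d0 * dRx1 0 g0 g1 a x1 t0 + d1 * dRx1 1 g0 g1 a x1 t0 + d2 * dRx1 2 g0 g1 a x1 t0)).
  { intros t0 Ht0. eapply is_derive_ext; [|apply L_Rx1].
    intro h. simpl. unfold Rstep. destruct (Rle_dec t0 tau); [reflexivity|lra]. }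
  assert (R2 : forall t0, tau <= t0 -> is_derive (fun h => Rstep (g0+h*d0) (g1+h*d1) (a+h*d2) x1 x2 tau (Sf h) t0) 0
     (d0 * dRx2 0 g0 g1 a x1 x2 tau (Sf 0) t0 + d1 * dRx2 1 g0 g1 a x1 x2 tau (Sf 0) t0
    + d2 * dRx2 2 g0 g1 a x1 x2 tau (Sf 0) t0)).
  { intros t0 Ht0. destruct (Req_dec t0 tau) as [->|Hne].
    - eapply is_derive_ext_loc; [|eapply L_Rx2; eauto].
      eapply filter_imp; [|exact Hloc]. intros h Hh. simpl. rewrite Hh.
      unfold Rstep. destruct (Rle_dec tau tau); [reflexivity|lra].
    - eapply is_derive_ext; [|eapply L_Rx2; eauto].
      intro h. simpl. unfold Rstep. destruct (Rle_dec t0 tau); [lra|reflexivity]. }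
  unfold pij, wj.
  destruct (Nat.ltb_spec L j) as [HLj|HLj].
  - replace (j <=? L)%nat with false by (symmetry; apply Nat.leb_gt; lia).
    apply R2. rewrite <- Htk. left. apply TM; lia.
  - replace (j <=? L)%nat with true by (symmetry; apply Nat.leb_le; lia).
    destruct (Rlt_dec (t (j-1)%nat) tau) as [Hlt|Hge].
    + assert (Hjk : (j - 1 < k)%nat).
      { destruct (Nat.lt_ge_cases (j-1) k) as [|Hc]; auto.
        destruct (Nat.eq_dec (j-1) k) as [E|E]; [rewrite E in Hlt; lra|].
        assert (t k < t (j-1)%nat) by (apply TM; lia). lra. }
      eapply is_derive_val.
      * apply (is_derive_minus (fun h => Rstep (g0+h*d0) (g1+h*d1) (a+h*d2) x1 x2 tau (Sf h) (t (j-1)%nat))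
                              (fun h => Rstep (g0+h*d0) (g1+h*d1) (a+h*d2) x1 x2 tau (Sf h) (t j))).
        -- apply R1. lra.
        -- apply R1. rewrite <- Htk. destruct (Nat.eq_dec j k) as [->|]; [lra|left; apply TM; lia].
      * change (minus ?x ?y) with (x - y). ring.
    + eapply is_derive_val.
      * apply (is_derive_minus (fun h => Rstep (g0+h*d0) (g1+h*d1) (a+h*d2) x1 x2 tau (Sf h) (t (j-1)%nat))
                              (fun h => Rstep (g0+h*d0) (g1+h*d1) (a+h*d2) x1 x2 tau (Sf h) (t j))).
        -- apply R2. lra.
        -- apply R2. assert (t (j-1)%nat < t j) by (apply TM; lia). lra.
      * change (minus ?x ?y) with (x - y). ring.
Qed.

Lemma Hc_lt g0 g1 a b : 0 < g0 -> 0 < g1 -> 0 <= a -> a < b -> Hc g0 g1 a < Hc g0 g1 b.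
Proof. intros. unfold Hc.
  assert (0 < (b-a)*(g0 + g1*(a+b)/2)) by (apply Rmult_lt_0_compat; nra).
  assert (g0 * b + g1 * b ^ 2 / 2 - (g0 * a + g1 * a ^ 2 / 2) = (b-a)*(g0 + g1*(a+b)/2)) by field.
  lra. Qed.

Lemma exp_dec e u v : 0 < e -> u < v -> exp (- (e * v)) < exp (- (e * u)).
Proof. intros. apply exp_increasing. nra. Qed.

Lemma Rstep_lt g0 g1 a x1 x2 tau s u v :
  0 < g0 -> 0 < g1 -> 0 < tau + s ->
  g1/2*(tau + s)^2 + g0*(tau + s) - exp(a*(x1-x2))*(g0*tau + g1*tau^2/2) = 0 ->
  0 <= u -> u < v ->
  Rstep g0 g1 a x1 x2 tau s v < Rstep g0 g1 a x1 x2 tau s u.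
Proof.
  intros H0 H1 Hs Q Hu Huv. unfold Rstep.
  destruct (Rle_dec v tau); destruct (Rle_dec u tau); try lra.
  - unfold Rx1. apply exp_dec; [apply exp_pos|]. apply Hc_lt; lra.
  - apply Rlt_le_trans with (Rx2 g0 g1 a x2 s tau).
    + unfold Rx2. apply exp_dec; [apply exp_pos|]. apply Hc_lt; lra.
    + rewrite (Rx_tau _ _ _ _ _ _ _ Q). unfold Rx1.
      destruct (Req_dec u tau) as [->|]; [lra|].
      left. apply exp_dec; [apply exp_pos|]. apply Hc_lt; lra.
  - unfold Rx2. apply exp_dec; [apply exp_pos|]. apply Hc_lt; lra.
Qed.

Lemma pij_pos g0 g1 a x1 x2 tau s L (t : nat -> R) j :
  0 < g0 -> 0 < g1 -> 0 < tau + s ->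
  g1/2*(tau + s)^2 + g0*(tau + s) - exp(a*(x1-x2))*(g0*tau + g1*tau^2/2) = 0 ->
  t 0%nat = 0 -> (forall j, (j < L)%nat -> t j < t (S j)) ->
  (1 <= j <= S L)%nat ->
  0 < pij g0 g1 a x1 x2 tau s L t j.
Proof.
  intros H0 H1 Hs Q Ht0 Ht Hj. pose proof (tmono t L Ht) as TM.
  unfold pij. destruct (Nat.leb_spec j L) as [HjL|HjL].
  - assert (Rstep g0 g1 a x1 x2 tau s (t j) < Rstep g0 g1 a x1 x2 tau s (t (j-1)%nat)); [|lra].
    apply Rstep_lt; auto.
    + destruct (Nat.eq_dec (j-1) 0) as [E|E]; [rewrite E; lra|].
      left. rewrite <- Ht0. apply TM; lia.
    + apply TM; lia.
  - unfold Rstep, Rx1, Rx2. destruct Rle_dec; apply exp_pos.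
Qed.

Lemma main_dir (x1 x2 tau : R) (L k : nat) (t : nat -> R)
  (s : R -> R -> R -> R) (n : nat -> nat) (beta g0h g1h a1h : R) (d0 d1 d2 : R) :
  x1 < x2 -> 0 < tau ->
  t 0%nat = 0 -> (forall j, (j < L)%nat -> t j < t (S j)) ->
  (1 <= k)%nat -> (k < L)%nat -> t k = tau ->
  (forall g0 g1 a1, 0 < g0 -> 0 < g1 -> 0 < a1 ->
     0 < tau + s g0 g1 a1 /\
     g1 / 2 * (tau + s g0 g1 a1) ^ 2 + g0 * (tau + s g0 g1 a1)
       - exp (a1 * (x1 - x2)) * (g0 * tau + g1 * tau ^ 2 / 2) = 0) ->
  0 < Ntot L n -> 0 <= beta ->
  0 < g0h -> 0 < g1h -> 0 < a1h ->
  (forall g0 g1 a1, 0 < g0 -> 0 < g1 -> 0 < a1 ->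
     dpd beta L (phat L n) (pij g0h g1h a1h x1 x2 tau (s g0h g1h a1h) L t)
       <= dpd beta L (phat L n) (pij g0 g1 a1 x1 x2 tau (s g0 g1 a1) L t)) ->
  sum1 L (fun j => (d0 * wj 0 g0h g1h a1h x1 x2 tau (s g0h g1h a1h) L t j
                  + d1 * wj 1 g0h g1h a1h x1 x2 tau (s g0h g1h a1h) L t j
                  + d2 * wj 2 g0h g1h a1h x1 x2 tau (s g0h g1h a1h) L t j)
     * Rpower (pij g0h g1h a1h x1 x2 tau (s g0h g1h a1h) L t j) (beta - 1)
     * (phat L n j - pij g0h g1h a1h x1 x2 tau (s g0h g1h a1h) L t j)) = 0.
Proof.
  intros Hx Htau Ht0 Ht Hk1 HkL Htk hs HN Hb Hg0 Hg1 Ha hmin.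
  pose (Sf := fun h => s (g0h+h*d0) (g1h+h*d1) (a1h+h*d2)).
  assert (Hpos : locally 0 (fun h => 0 < g0h+h*d0 /\ 0 < g1h+h*d1 /\ 0 < a1h+h*d2)).
  { apply filter_and; [|apply filter_and]; apply loc_pos; auto. }
  assert (Hloc : locally 0 (fun h => 0 < g0h + h*d0 /\ 0 < g1h + h*d1 /\ 0 < tau + Sf h /\
     (g1h+h*d1)/2*(tau + Sf h)^2 + (g0h+h*d0)*(tau + Sf h)
       - exp((a1h+h*d2)*(x1-x2))*((g0h+h*d0)*tau + (g1h+h*d1)*tau^2/2) = 0)).
  { eapply filter_imp; [|exact Hpos]. intros h [P0 [P1 P2]].
    destruct (hs _ _ _ P0 P1 P2) as [A B]. unfold Sf. tauto. }
  destruct (S_deriv g0h g1h a1h d0 d1 d2 x1 x2 tau Sf Hg0 Hg1 Htau Hloc) as [S' [HD HS]].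
  assert (S0 : Sf 0 = s g0h g1h a1h).
  { unfold Sf. rewrite !Rmult_0_l, !Rplus_0_r. reflexivity. }
  destruct (hs g0h g1h a1h Hg0 Hg1 Ha) as [Hu Q].
  assert (Hloc2 : locally 0 (fun h => Rx2 (g0h+h*d0) (g1h+h*d1) (a1h+h*d2) x2 (Sf h) tau
                                 = Rx1 (g0h+h*d0) (g1h+h*d1) (a1h+h*d2) x1 tau)).
  { eapply filter_imp; [|exact Hloc]. intros h [_ [_ [_ P3]]]. apply Rx_tau. exact P3. }
  pose (q := fun j h => pij (g0h+h*d0) (g1h+h*d1) (a1h+h*d2) x1 x2 tau (Sf h) L t j).
  pose (W := fun j => d0 * wj 0 g0h g1h a1h x1 x2 tau (Sf 0) L t j
                  + d1 * wj 1 g0h g1h a1h x1 x2 tau (Sf 0) L t j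
                  + d2 * wj 2 g0h g1h a1h x1 x2 tau (Sf 0) L t j).
  assert (Hq : forall j, (1 <= j <= S L)%nat -> is_derive (q j) 0 (W j) /\ 0 < q j 0).
  { intros j Hj. split.
    - unfold q, W. eapply pij_deriv; eauto; rewrite S0; auto.
    - unfold q. cbv beta. rewrite !Rmult_0_l, !Rplus_0_r, S0.
      eapply pij_pos; eauto. }
  assert (Hp : forall j, 0 <= phat L n j).
  { intro j. unfold phat. apply Rmult_le_pos; [apply pos_INR|left; apply Rinv_0_lt_compat; exact HN]. }
  assert (HW : sum1 L W = 0).
  { assert (H1 : is_derive (fun h => sum1 L (fun j => q j h)) 0 (sum1 L W)).
    { unfold sum1. apply (sum_derive (fun j h => q (S j) h) (fun j => W (S j))).
      intros j Hj. apply Hq. lia. }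
    assert (H2 : is_derive (fun h => sum1 L (fun j => q j h)) 0 0).
    { apply (is_derive_ext (fun _ => 1)).
      - intro h. unfold q. rewrite (sum_pij _ _ _ _ _ _ _ L t). rewrite Ht0.
        unfold Rstep. destruct (Rle_dec 0 tau); [|lra]. unfold Rx1, Hc.
        replace (- (exp ((a1h + h * d2) * x1) * ((g0h + h * d0) * 0 + (g1h + h * d1) * 0 ^ 2 / 2))) with 0 by field.
        rewrite exp_0. reflexivity.
      - eapply is_derive_val; [auto_derive; auto|]. reflexivity. }
    rewrite <- (is_derive_unique _ _ _ H1). exact (is_derive_unique _ _ _ H2). }
  pose proof (dpd_deriv q W beta (phat L n) L Hb Hq Hp HW) as HDpd.
  apply locmin in HDpd.
  - unfold W, q in HDpd. rewrite S0 in HDpd. rewrite !Rmult_0_l, !Rplus_0_r in HDpd.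
    apply Rmult_integral in HDpd. destruct HDpd as [HH|HH]; [lra|exact HH].
  - eapply filter_imp; [|exact Hpos]. intros h [P0 [P1 P2]]. cbv beta.
    unfold q. rewrite !Rmult_0_l, !Rplus_0_r, S0. apply hmin; auto.
Qed.

Theorem theorem1 (x1 x2 tau : R) (L k : nat) (t : nat -> R)
  (s : R -> R -> R -> R) (n : nat -> nat) (beta g0h g1h a1h : R) :
  x1 < x2 -> 0 < tau ->
  t 0%nat = 0 -> (forall j, (j < L)%nat -> t j < t (S j)) ->
  (1 <= k)%nat -> (k < L)%nat -> t k = tau ->
  (* s(theta) = u - tau, u the (unique) positive root of the quadratic *)
  (forall g0 g1 a1, 0 < g0 -> 0 < g1 -> 0 < a1 ->
     0 < tau + s g0 g1 a1 /\
     g1 / 2 * (tau + s g0 g1 a1) ^ 2 + g0 * (tau + s g0 g1 a1)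
       - exp (a1 * (x1 - x2)) * (g0 * tau + g1 * tau ^ 2 / 2) = 0) ->
  0 < Ntot L n -> 0 <= beta ->
  0 < g0h -> 0 < g1h -> 0 < a1h ->
  (* (g0h, g1h, a1h) is a minimum density power divergence estimator over Theta *)
  (forall g0 g1 a1, 0 < g0 -> 0 < g1 -> 0 < a1 ->
     dpd beta L (phat L n) (pij g0h g1h a1h x1 x2 tau (s g0h g1h a1h) L t)
       <= dpd beta L (phat L n) (pij g0 g1 a1 x1 x2 tau (s g0 g1 a1) L t)) ->
  forall i, (i < 3)%nat ->
    Ucomp i beta g0h g1h a1h x1 x2 tau (s g0h g1h a1h) L t (phat L n) = 0.
Proof.
  intros Hx Htau Ht0 Ht Hk1 HkL Htk hs HN Hb Hg0 Hg1 Ha hmin i Hi.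
  destruct i as [|[|[|i]]]; [| | |lia].
  - pose proof (main_dir x1 x2 tau L k t s n beta g0h g1h a1h 1 0 0 Hx Htau Ht0 Ht Hk1 HkL Htk hs HN Hb Hg0 Hg1 Ha hmin) as M.
    unfold Ucomp. rewrite <- M. unfold sum1. apply sum_eq. intros; ring.
  - pose proof (main_dir x1 x2 tau L k t s n beta g0h g1h a1h 0 1 0 Hx Htau Ht0 Ht Hk1 HkL Htk hs HN Hb Hg0 Hg1 Ha hmin) as M.
    unfold Ucomp. rewrite <- M. unfold sum1. apply sum_eq. intros; ring.
  - pose proof (main_dir x1 x2 tau L k t s n beta g0h g1h a1h 0 0 1 Hx Htau Ht0 Ht Hk1 HkL Htk hs HN Hb Hg0 Hg1 Ha hmin) as M.
    unfold Ucomp. rewrite <- M. unfold sum1. apply sum_eq. intros; ring.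
Qed.
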